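(* Every universal totally positive diagonal quadratic form over $\mathcal{O}_K$ has at least $M_D/s$ variables if $s$ is even and at least $M_D/(2s)$ variables if $s$ is odd.
   Context: $D>1$ squarefree, $K=\mathbb{Q}(\sqrt D)$, $\mathcal{O}_K$ its ring of integers. A totally positive diagonal form is $a_1x_1^2+\dots+a_mx_m^2$ with $a_i\in\mathcal{O}_K$ totally positive (positive together with their conjugates); it is universal if it represents every totally positive element of $\mathcal{O}_K$ with $x_i\in\mathcal{O}_K$. $\omega_D=\sqrt D$ if $D\equiv2,3\pmod4$, $\omega_D=\frac{1+\sqrt D}2$ if $D\equiv1\pmod4$, with continued fraction $\omega_D=[u_0;\overline{u_1,\dots,u_s}]$, $s$ minimal period. $M_D=u_1+u_3+\dots+u_{s-1}$ if $s$ is even; $M_D=2u_0+u_1+\dots+u_{s-1}$ if $s$ odd and $D\equiv2,3\pmod4$; $M_D=2u_0+u_1+\dots+u_{s-1}-1$ if $s$ odd and $D\equiv1\pmod4$. *)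

(* Defs.v *)
From HB Require Import structures.
From mathcomp Require Import all_boot all_order all_algebra.
From mathcomp Require Import reals.
Set Implicit Arguments. Unset Strict Implicit. Unset Printing Implicit Defensive.
Import Order.TTheory GRing.Theory Num.Theory.
Local Open Scope ring_scope.

Definition squarefree (D : nat) : Prop :=
  forall p : nat, prime p -> ~~ (p * p %| D)%N.

Section QuadField.
Variable R : realType.
Variable D : nat.

(* K = Q(sqrt D) is viewed as a subfield of R via its first embedding. *)
Definition sqrtD : R := Num.sqrt (D%:R).

Definition omega : R :=
  if (D %% 4 == 1)%N then (1 + sqrtD) / 2 else sqrtD.
Definition omega' : R :=
  if (D %% 4 == 1)%N then (1 - sqrtD) / 2 else - sqrtD.

Definition in_OK (x : R) : Prop :=
  exists a b : int, x = a%:~R + b%:~R * omega.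

Definition totally_positive (x : R) : Prop :=
  exists a b : int, x = a%:~R + b%:~R * omega /\
    0 < a%:~R + b%:~R * omega /\ 0 < a%:~R + b%:~R * omega'.

(* a_1 x_1^2 + ... + a_m x_m^2 with totally positive a_i in O_K *)
Definition tp_diagonal_form (m : nat) (a : 'I_m -> R) : Prop :=
  forall i, totally_positive (a i).

Definition universal_form (m : nat) (a : 'I_m -> R) : Prop :=
  forall alpha : R, totally_positive alpha ->
    exists x : 'I_m -> R, (forall i, in_OK (x i)) /\
      alpha = \sum_(i < m) a i * x i ^+ 2.

Fixpoint cf_rem (k : nat) : R :=
  match k with
  | 0%N => omega
  | k'.+1 => (cf_rem k' - (Num.floor (cf_rem k'))%:~R)^-1
  end.

Definition cf_u (k : nat) : int := Num.floor (cf_rem k).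

Definition is_period (s : nat) : Prop :=
  (0 < s)%N /\ forall k : nat, (1 <= k)%N -> cf_u (k + s) = cf_u k.

Definition is_min_period (s : nat) : Prop :=
  is_period s /\ forall s' : nat, is_period s' -> (s <= s')%N.

Definition M_D (s : nat) : int :=
  if ~~ odd s then \sum_(0 <= j < s./2) cf_u (2 * j + 1)
  else if (D %% 4 == 1)%N then 2 * cf_u 0 + \sum_(1 <= i < s) cf_u i - 1
  else 2 * cf_u 0 + \sum_(1 <= i < s) cf_u i.

End QuadField.

(* Main.v *)
Require Import Defs.
From HB Require Import structures.
From mathcomp Require Import all_boot all_order all_algebra.
From mathcomp Require Import reals.
From mathcomp Require Import zify ring lra.
From Stdlib Require Import ClassicalEpsilon.
Set Implicit Arguments. Unset Strict Implicit. Unset Printing Implicit Defensive.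
Import Order.TTheory GRing.Theory Num.Theory.
Local Open Scope ring_scope.

Lemma nat_sq_contra (D e c : nat) : (1 < D)%N -> squarefree D -> (0 < e)%N ->
  (D * e ^ 2 = c ^ 2)%N -> False.
Proof.
move=> D1 sf e0 E.
have pp := pdiv_prime D1.
set p := pdiv D in pp.
have pD : (p %| D)%N by exact: pdiv_dvd.
have D0 : (0 < D)%N by lia.
have c0 : (0 < c)%N.
  case: c E => [|c] // /eqP; rewrite muln_eq0 !expn_eq0 /=; lia.
have l1 : logn p D = 1%N.
  apply/eqP; rewrite eqn_leq; apply/andP; split.
    rewrite leqNgt; apply/negP => H.
    have := pfactor_dvdn 2 pp D0; rewrite H expnS expn1 => Hd.
    by move: (sf p pp); rewrite Hd.
  by rewrite -(pfactor_dvdn 1 pp D0) expn1.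
have := congr1 (logn p) E.
rewrite lognM // ?expn_gt0 ?e0 // !lognX l1; lia.
Qed.

Section Main.
Variable R : realType.
Variable D : nat.
Hypothesis HD1 : (1 < D)%N.
Hypothesis Hsf : squarefree D.

Local Notation w := (omega R D).
Local Notation w' := (omega' R D).
Local Notation sD := (sqrtD R D).

Lemma sD2 : sD ^+ 2 = D%:R.
Proof. by rewrite /sqrtD sqr_sqrtr // ler0n. Qed.

Lemma sD_gt1 : 1 < sD.
Proof.
rewrite /sqrtD -[X in X < _]sqrtr1 ltr_sqrt ?ltr0n ?ltr1n //; lia.
Qed.

Lemma sD_irr (c e : int) : e != 0 -> sD * e%:~R = c%:~R -> False.
Proof.
move=> e0 E.
have E2 : ((D%:Z * e ^+ 2)%:~R : R) = (c ^+ 2)%:~R.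
  rewrite rmorphM rmorphXn /= rmorphXn /= -E exprMn sD2.
  by rewrite mulrC.
move/intr_inj: E2 => /(congr1 absz); rewrite abszM !abszX /= => E3.
apply: (nat_sq_contra HD1 Hsf _ E3).
by rewrite absz_gt0.
Qed.

Definition tt : int := if (D %% 4 == 1)%N then 1 else 0.
Definition nn : int := if (D %% 4 == 1)%N then (D %/ 4)%:Z else D%:Z.

Lemma w_sq : w ^+ 2 = tt%:~R * w + nn%:~R.
Proof.
rewrite /omega /tt /nn; case: ifP => H; last by rewrite sD2 mul0r add0r.
have HD : (D%:R : R) = 4 * (D %/ 4)%:R + 1.
  by rewrite {1}(divn_eq D 4) (eqP H) natrD natrM mulrC.
rewrite /= mul1r; apply/eqP; rewrite -subr_eq0; apply/eqP.
have -> : ((1 + sD) / 2) ^+ 2 - ((1 + sD) / 2 + ((D %/ 4)%:Z)%:~R) =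
   (sD ^+ 2 - (4 * (D %/ 4)%:R + 1)) / 4.
  rewrite -[((D %/ 4)%:Z)%:~R]/((D %/ 4)%:R). by field.
by rewrite sD2 HD subrr mul0r.
Qed.

Lemma w'E : w' = tt%:~R - w.
Proof.
rewrite /omega /omega' /tt; case: ifP => _ /=; last by rewrite sub0r.
by field.
Qed.

Lemma w'_sq : w' ^+ 2 = tt%:~R * w' + nn%:~R.
Proof.
rewrite w'E; apply/eqP; rewrite -subr_eq0; apply/eqP.
have -> : (tt%:~R - w) ^+ 2 - (tt%:~R * (tt%:~R - w) + nn%:~R) =
   w ^+ 2 - (tt%:~R * w + nn%:~R) :> R by ring.
by rewrite w_sq subrr.
Qed.

Lemma w_irr (a b : int) : a%:~R + b%:~R * w = 0 -> a = 0 /\ b = 0.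
Proof.
move=> E.
have b0 : b = 0.
  apply/eqP; apply/negPn/negP => b0.
  move: E; rewrite /omega; case: ifP => _ E.
    apply: (@sD_irr (- (a + a + b)) b b0).
    rewrite rmorphN !rmorphD /=.
    have : 2 * (a%:~R + b%:~R * ((1 + sD) / 2)) = 0 by rewrite E mulr0.
    move=> E2.
    have -> : sD * b%:~R = 2 * (a%:~R + b%:~R * ((1 + sD) / 2)) - (a%:~R + a%:~R + b%:~R).
      by field.
    by rewrite E2 sub0r.
  apply: (@sD_irr (- a) b b0).
  rewrite rmorphN /=.
  have -> : - (a%:~R) = - (a%:~R + b%:~R * sD) + b%:~R * sD :> R by ring.
  by rewrite E oppr0 add0r mulrC.
split=> //; move: E; rewrite b0 mul0r addr0.
by move/eqP; rewrite intr_eq0 => /eqP.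
Qed.

Definition pr := (int * int)%type.
Definition e1 (p : pr) : R := p.1%:~R + p.2%:~R * w.
Definition e2 (p : pr) : R := p.1%:~R + p.2%:~R * w'.
Definition mulp (p q : pr) : pr :=
  (p.1 * q.1 + p.2 * q.2 * nn, p.1 * q.2 + p.2 * q.1 + p.2 * q.2 * tt).

Lemma gen_mul (x : R) (p q : pr) : x ^+ 2 = tt%:~R * x + nn%:~R ->
  (p.1 * q.1 + p.2 * q.2 * nn)%:~R + (p.1 * q.2 + p.2 * q.1 + p.2 * q.2 * tt)%:~R * x
  = (p.1%:~R + p.2%:~R * x) * (q.1%:~R + q.2%:~R * x).
Proof.
move=> Hx; apply/eqP; rewrite -subr_eq0; apply/eqP.
rewrite !rmorphD !rmorphM /=.
have -> : forall a b c d t n : R,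
  (a * c + b * d * n + (a * d + b * c + b * d * t) * x - (a + b * x) * (c + d * x))
  = - (b * d) * (x ^+ 2 - (t * x + n)) by move=> *; ring.
by rewrite Hx subrr mulr0.
Qed.

Lemma e1M p q : e1 (mulp p q) = e1 p * e1 q.
Proof. exact: gen_mul w_sq. Qed.
Lemma e2M p q : e2 (mulp p q) = e2 p * e2 q.
Proof. exact: gen_mul w'_sq. Qed.

Lemma e1_inj p q : e1 p = e1 q -> p = q.
Proof.
case: p q => [a b] [c d]; rewrite /e1 /= => E.
have : (a - c)%:~R + (b - d)%:~R * w = 0 :> R.
  have -> : (a - c)%:~R + (b - d)%:~R * w = (a%:~R + b%:~R * w) - (c%:~R + d%:~R * w) :> R.
    by rewrite !rmorphB /=; ring.
  by rewrite E subrr.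
by case/w_irr => /eqP; rewrite subr_eq0 => /eqP -> /eqP; rewrite subr_eq0 => /eqP ->.
Qed.

Lemma e2_inj p q : e2 p = e2 q -> p = q.
Proof.
case: p q => [a b] [c d]; rewrite /e2 /= w'E => E.
have : (a - c + (b - d) * tt)%:~R + (- (b - d))%:~R * w = 0 :> R.
  have -> : (a - c + (b - d) * tt)%:~R + (- (b - d))%:~R * w =
     (a%:~R + b%:~R * (tt%:~R - w)) - (c%:~R + d%:~R * (tt%:~R - w)) :> R.
    by rewrite !rmorphD !rmorphM !rmorphN !rmorphB /=; ring.
  by rewrite E subrr.
case/w_irr => H1 /eqP; rewrite oppr_eq0 subr_eq0 => /eqP bd.
move: H1; rewrite bd subrr mul0r addr0 => /eqP; rewrite subr_eq0 => /eqP -> //.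
Qed.

Local Notation xi := (cf_rem R D).
Local Notation u := (cf_u R D).

Definition ratl (x : R) := exists a b : int, b != 0 /\ x = a%:~R / b%:~R.

Lemma w_notrat : ~ ratl w.
Proof.
case=> a [b [b0 E]].
have : a%:~R + (- b)%:~R * w = 0 :> R.
  by rewrite E rmorphN /= mulNr mulrCA divff ?intr_eq0 // mulr1 subrr.
by case/w_irr => _ /eqP; rewrite oppr_eq0 (negbTE b0).
Qed.

Lemma xi_notrat k : ~ ratl (xi k).
Proof.
elim: k => [|k IH]; first exact: w_notrat.
case=> a [b [b0 E]]; apply: IH.
rewrite /= in E.
have [z|nz] := eqVneq (xi k - (Num.floor (xi k))%:~R) 0.
  exists (Num.floor (xi k)), 1; split=> //.
  by rewrite divr1; apply/eqP; rewrite -subr_eq0; apply/eqP.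
have a0 : a != 0.
  apply/negP => /eqP a0; move: E; rewrite a0 mul0r => /eqP; rewrite invr_eq0.
  by rewrite (negbTE nz).
exists (Num.floor (xi k) * a + b), a; split=> //.
have : (xi k - (Num.floor (xi k))%:~R) = b%:~R / a%:~R.
  by rewrite -[LHS]invrK E invf_div.
move=> E2; rewrite rmorphD rmorphM /= mulrDl mulfK ?intr_eq0 // -E2; ring.
Qed.

Lemma frac_pos k : 0 < xi k - (u k)%:~R < 1.
Proof.
rewrite /cf_u; have h1 := floor_le (xi k); have h2 := floorD1_gt (xi k).
have h3 : (Num.floor (xi k))%:~R != xi k.
  apply/negP => /eqP E.
  by apply: (@xi_notrat k); exists (Num.floor (xi k)), 1; rewrite divr1 E.
apply/andP; split; first by rewrite subr_gt0 lt_neqAle h3 h1.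
move: h2; rewrite rmorphD /= rmorph1 => h2.
by rewrite ltrBlDr addrC.
Qed.

Lemma xiS k : xi k.+1 = (xi k - (u k)%:~R)^-1.
Proof. by []. Qed.

Lemma xi_gt1 k : 1 < xi k.+1.
Proof.
rewrite xiS; have /andP[h1 h2] := frac_pos k.
by rewrite invf_gt1.
Qed.

Lemma w_gt1 : 1 < w.
Proof.
have := sD_gt1; rewrite /omega; case: ifP => // _ h.
lra.
Qed.

Lemma xi_gt1' k : 1 < xi k.
Proof. by case: k => [|k]; [exact: w_gt1|exact: xi_gt1]. Qed.

Lemma u_ge1 k : 1 <= u k.
Proof. by rewrite /cf_u floor_ge_int ltW // xi_gt1'. Qed.

Lemma w'_lt0 : w' < 0.
Proof.
have := sD_gt1; rewrite /omega'; case: ifP => _ h.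
  lra.
lra.
Qed.

Fixpoint Pn (n : nat) : int :=
  match n with
  | 0%N => 0
  | 1%N => 1
  | (m.+1 as m').+1 => u m * Pn m' + Pn m
  end.
Fixpoint Qn (n : nat) : int :=
  match n with
  | 0%N => 1
  | 1%N => 0
  | (m.+1 as m').+1 => u m * Qn m' + Qn m
  end.

Definition En n : R := (Qn n)%:~R * w - (Pn n)%:~R.
Definition Vn n : R := (Pn n)%:~R - (Qn n)%:~R * w'.

Lemma E_rec n : En n.+2 = (u n)%:~R * En n.+1 + En n.
Proof. rewrite /En /= !rmorphD !rmorphM /=; ring. Qed.
Lemma V_rec n : Vn n.+2 = (u n)%:~R * Vn n.+1 + Vn n.
Proof. rewrite /Vn /= !rmorphD !rmorphM /=; ring. Qed.

Lemma E_xi n : En n = - xi n * En n.+1.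
Proof.
elim: n => [|n IH]; first by rewrite /En /= mul1r subr0 mul0r sub0r mulrNN mulr1.
rewrite E_rec IH -mulrDl xiS.
have /andP[h1 _] := frac_pos n.
have -> : (u n)%:~R + - xi n = - (xi n - (u n)%:~R) by ring.
rewrite mulNr mulNr mulrN opprK mulrA mulVf ?mul1r //.
by rewrite gt_eqF.
Qed.

Lemma E_rec2 n : En n.+2 = ((u n)%:~R - xi n) * En n.+1.
Proof. by rewrite E_rec [En n]E_xi mulrBl mulNr. Qed.

Lemma E_sign j : En (2 * j).+1 < 0 /\ 0 < En (2 * j).+2.
Proof.
have step : forall n, (En n.+1 < 0 -> 0 < En n.+2) /\ (0 < En n.+1 -> En n.+2 < 0).
  move=> n; rewrite E_rec2; have /andP[h1 _] := frac_pos n.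
  have hn : (u n)%:~R - xi n < 0 by rewrite subr_lt0 -subr_gt0.
  by split=> h; [rewrite nmulr_rgt0|rewrite nmulr_rlt0].
elim: j => [|j [IH1 IH2]].
  split; first by rewrite /En /= mul0r sub0r oppr_lt0.
  by apply: (step 0%N).1; rewrite /En /= mul0r sub0r oppr_lt0.
have h3 : En (2 * j.+1).+1 < 0.
  by have := (step (2 * j).+1).2 IH2; rewrite mulnS.
split=> //.
by apply: (step _).1.
Qed.

Lemma V_pos n : 0 < Vn n /\ 0 < Vn n.+1.
Proof.
elim: n => [|n [h1 h2]].
  by rewrite /Vn /= !rmorph0 !rmorph1 mul1r mul0r sub0r subr0 oppr_gt0 w'_lt0 ltr01.
split=> //; rewrite V_rec ltr_pwDr // mulr_ge0 // ?ltW //.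
by rewrite ltr0z (lt_le_trans _ (u_ge1 n)).
Qed.

Lemma V_incr n : Vn n.+1 < Vn n.+2.
Proof.
rewrite V_rec; have [h1 h2] := V_pos n.
apply: (@le_lt_trans _ _ ((u n)%:~R * Vn n.+1)); last by rewrite ltrDl.
by rewrite ler_peMl ?ler1z ?u_ge1 // ltW.
Qed.

Definition Dl n := Pn n * Qn n.+1 - Pn n.+1 * Qn n.

Lemma Dl_sq n : Dl n * Dl n = 1.
Proof.
suff : Dl n = 1 \/ Dl n = -1 by case=> ->.
elim: n => [|n IH]; first by right.
have -> : Dl n.+1 = - Dl n by rewrite /Dl /=; ring.
by case: IH => ->; [right|left; rewrite opprK].
Qed.

Definition lamg (al be : int) (z : pr) : int := al * z.1 + be * z.2.
Definition Bf al be (A X Y : pr) : int := lamg al be (mulp (mulp A X) Y).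

Lemma Bf_sym al be A X Y : Bf al be A X Y = Bf al be A Y X.
Proof. case: A X Y => [a1 a2] [x1 x2] [y1 y2]; rewrite /Bf /lamg /mulp /=; ring. Qed.

Lemma Bf_add al be A X Y :
  Bf al be A (X.1 + Y.1, X.2 + Y.2) (X.1 + Y.1, X.2 + Y.2)
  = Bf al be A X X + Bf al be A Y Y + 2 * Bf al be A X Y.
Proof. case: A X Y => [a1 a2] [x1 x2] [y1 y2]; rewrite /Bf /lamg /mulp /=; ring. Qed.

Lemma Bf_sub al be A X Y :
  Bf al be A (X.1 - Y.1, X.2 - Y.2) (X.1 - Y.1, X.2 - Y.2)
  = Bf al be A X X + Bf al be A Y Y - 2 * Bf al be A X Y.
Proof. case: A X Y => [a1 a2] [x1 x2] [y1 y2]; rewrite /Bf /lamg /mulp /=; ring. Qed.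

Lemma Bf_orth al be A X Y :
  (forall W : pr, W != (0, 0) -> 1 <= Bf al be A W W) ->
  Bf al be A X X = 1 -> Bf al be A Y Y = 1 ->
  (X.1 + Y.1, X.2 + Y.2) != (0, 0) -> (X.1 - Y.1, X.2 - Y.2) != (0, 0) ->
  Bf al be A X Y = 0.
Proof.
move=> pos hX hY h1 h2.
have := pos _ h1; rewrite Bf_add hX hY.
have := pos _ h2; rewrite Bf_sub hX hY.
lia.
Qed.

Lemma Bf_cross al be A X Y Z :
  (Y.1 * Z.2 - Y.2 * Z.1) * Bf al be A X X + (Z.1 * X.2 - Z.2 * X.1) * Bf al be A Y X
  + (X.1 * Y.2 - X.2 * Y.1) * Bf al be A Z X = 0.
Proof.
case: A X Y Z => [a1 a2] [x1 x2] [y1 y2] [z1 z2]; rewrite /Bf /lamg /mulp /=; ring.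
Qed.

Lemma Bf_lin1 al be A Y Z :
  Y.1 * Bf al be A Z Y - Z.1 * Bf al be A Y Y =
  (Y.1 * Z.2 - Y.2 * Z.1) * Bf al be A (0, 1) Y.
Proof. case: A Y Z => [a1 a2] [y1 y2] [z1 z2]; rewrite /Bf /lamg /mulp /=; ring. Qed.

Lemma Bf_lin2 al be A Y Z :
  Y.2 * Bf al be A Z Y - Z.2 * Bf al be A Y Y =
  - (Y.1 * Z.2 - Y.2 * Z.1) * Bf al be A (1, 0) Y.
Proof. case: A Y Z => [a1 a2] [y1 y2] [z1 z2]; rewrite /Bf /lamg /mulp /=; ring. Qed.

Lemma core3 al be A X Y Z :
  (forall W : pr, W != (0, 0) -> 1 <= Bf al be A W W) ->
  Bf al be A X X = 1 -> Bf al be A Y Y = 1 -> Bf al be A Z Z = 1 ->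
  (X.1 + Y.1, X.2 + Y.2) != (0, 0) -> (X.1 - Y.1, X.2 - Y.2) != (0, 0) ->
  (X.1 + Z.1, X.2 + Z.2) != (0, 0) -> (X.1 - Z.1, X.2 - Z.2) != (0, 0) ->
  (Y.1 + Z.1, Y.2 + Z.2) != (0, 0) -> (Y.1 - Z.1, Y.2 - Z.2) != (0, 0) ->
  False.
Proof.
move=> pos hX hY hZ a1 a2 a3 a4 a5 a6.
have oXY := Bf_orth pos hX hY a1 a2.
have oXZ := Bf_orth pos hX hZ a3 a4.
have oYZ := Bf_orth pos hY hZ a5 a6.
have c := Bf_cross al be A X Y Z.
rewrite hX (Bf_sym _ _ _ Y X) oXY (Bf_sym _ _ _ Z X) oXZ !mulr0 !addr0 mulr1 in c.
have l1 := Bf_lin1 al be A Y Z.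
have l2 := Bf_lin2 al be A Y Z.
rewrite c (Bf_sym _ _ _ Z Y) oYZ hY mul0r mulr0 sub0r mulr1 in l1.
rewrite c (Bf_sym _ _ _ Z Y) oYZ hY oppr0 !mul0r mulr0 sub0r mulr1 in l2.
move: hZ l1 l2; clear; case: Z => z1 z2 /= hZ /eqP.
rewrite oppr_eq0 => /eqP E1 /eqP; rewrite oppr_eq0 => /eqP E2.
by move: hZ; rewrite E1 E2 /Bf /lamg /mulp /= !(mulr0, mul0r, addr0).
Qed.

Definition lam a (z : pr) : int := lamg (Dl a * Qn a.+1) (Dl a * Pn a.+1) z.
Definition dco a (z : pr) : int := - Dl a * (z.1 * Qn a + z.2 * Pn a).

Lemma lam_int a (z : pr) :
  z.1 = lam a z * Pn a + dco a z * Pn a.+1 /\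
  z.2 = - (lam a z * Qn a + dco a z * Qn a.+1).
Proof.
have H := Dl_sq a.
case: z => z1 z2; rewrite /lam /dco /lamg /=.
split.
  have -> : (Dl a * Qn a.+1 * z1 + Dl a * Pn a.+1 * z2) * Pn a +
    - Dl a * (z1 * Qn a + z2 * Pn a) * Pn a.+1 =
    Dl a * (Pn a * Qn a.+1 - Pn a.+1 * Qn a) * z1 by ring.
  by rewrite -/(Dl a) H mul1r.
have -> : - ((Dl a * Qn a.+1 * z1 + Dl a * Pn a.+1 * z2) * Qn a +
    - Dl a * (z1 * Qn a + z2 * Pn a) * Qn a.+1) =
    Dl a * (Pn a * Qn a.+1 - Pn a.+1 * Qn a) * z2 by ring.
by rewrite -/(Dl a) H mul1r.
Qed.

Lemma lam_real a (z : pr) :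
  e1 z = (lam a z)%:~R * (- En a) + (dco a z)%:~R * (- En a.+1) /\
  e2 z = (lam a z)%:~R * Vn a + (dco a z)%:~R * Vn a.+1.
Proof.
have [h1 h2] := lam_int a z.
move: (lam a z) (dco a z) h1 h2 => c d h1 h2.
have h1' : (z.1%:~R : R) = c%:~R * (Pn a)%:~R + d%:~R * (Pn a.+1)%:~R.
  by rewrite h1 intrD !intrM.
have h2' : (z.2%:~R : R) = - (c%:~R * (Qn a)%:~R + d%:~R * (Qn a.+1)%:~R).
  by rewrite h2 intrN intrD !intrM.
rewrite /e1 /e2 /En /Vn h1' h2'; split; ring.
Qed.

Lemma lam_ge1 j (z : pr) : 0 < e1 z -> 0 < e2 z -> 1 <= lam (2 * j).+1 z.
Proof.
have [s1 s2] := E_sign j.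
have [v1 v2] := V_pos (2 * j).+1.
have [r1 r2] := lam_real (2 * j).+1 z.
rewrite r1 r2.
set c := lam _ z; set d := dco _ z.
move=> p1 p2.
rewrite leNgt; apply/negP => hc.
have hc' : (c%:~R : R) <= 0 by rewrite lerz0; lia.
have [hd|hd] := lerP d 0.
  have hd' : (d%:~R : R) <= 0 by rewrite lerz0.
  move: p2; nra.
have hd' : (1 : R) <= d%:~R by rewrite ler1z; lia.
move: p1; nra.
Qed.

Definition zc a (r : int) : pr := (Pn a + r * Pn a.+1, - (Qn a + r * Qn a.+1)).

Lemma lam_zc a r : lam a (zc a r) = 1.
Proof.
have H := Dl_sq a.
rewrite /lam /lamg /zc /=.
have -> : Dl a * Qn a.+1 * (Pn a + r * Pn a.+1) + Dl a * Pn a.+1 * - (Qn a + r * Qn a.+1)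
  = Dl a * (Pn a * Qn a.+1 - Pn a.+1 * Qn a) by ring.
by [].
Qed.

Lemma e1_zc a r : e1 (zc a r) = - En a - r%:~R * En a.+1.
Proof. rewrite /e1 /zc /En /= intrN !intrD !intrM; ring. Qed.
Lemma e2_zc a r : e2 (zc a r) = Vn a + r%:~R * Vn a.+1.
Proof. rewrite /e2 /zc /Vn /= intrN !intrD !intrM; ring. Qed.

Lemma zc_tp j (r : int) : 0 <= r -> r <= u (2 * j).+1 ->
  0 < e1 (zc (2 * j).+1 r) /\ 0 < e2 (zc (2 * j).+1 r).
Proof.
move=> r0 ru.
have [s1 s2] := E_sign j.
have [s3 _] := E_sign j.+1.
have [v1 v2] := V_pos (2 * j).+1.
have E3 := E_rec (2 * j).+1.
rewrite mulnS in s3; change (is_true (En (2 * j).+3 < 0)) in s3.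
have r0' : (0 : R) <= r%:~R by rewrite ler0z.
have ru' : (r%:~R : R) <= (u (2 * j).+1)%:~R by rewrite ler_int.
rewrite e1_zc e2_zc; split; last by nra.
nra.
Qed.

Lemma pigeon3 N m (f : 'I_N -> 'I_m) : (2 * m < N)%N ->
  exists i, exists r1 r2 r3, [/\ f r1 = i, f r2 = i & f r3 = i] /\
     [/\ r1 != r2, r2 != r3 & r3 != r1].
Proof.
move=> Hm.
have [i Hi|] := pickP (fun i => 2 < #|[pred r | f r == i]|)%N.
  case/card_gt2P: Hi => x [y [z [[xi yi zi] [d1 d2 d3]]]].
  exists i, x, y, z; split=> //.
  by rewrite !inE in xi yi zi; split; apply/eqP.
move=> H.
have : (N <= 2 * m)%N.
  have -> : N = (\sum_(r < N) 1)%N by rewrite sum1_card card_ord.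
  rewrite (partition_big f predT) //=.
  apply: (@leq_trans (\sum_(i < m) 2)%N); last by rewrite sum_nat_const card_ord mulnC.
  apply: leq_sum => i _.
  have := H i; rewrite /= ltnNge => /negbFE.
  by rewrite -sum1_card.
lia.
Qed.

Definition coord (v : R) : pr := epsilon (inhabits (0, 0)) (fun p : pr => v = e1 p).

Lemma coordP v : in_OK D v -> v = e1 (coord v).
Proof.
case=> a [b E]; rewrite /coord.
apply: (epsilon_spec (inhabits (0, 0)) (fun p : pr => v = e1 p)).
by exists (a, b).
Qed.

Lemma coord_e1 p : coord (e1 p) = p.
Proof. apply: e1_inj; rewrite -coordP //; by exists p.1, p.2. Qed.

Lemma tp_coord v : totally_positive D v ->
  [/\ v = e1 (coord v), 0 < e1 (coord v) & 0 < e2 (coord v)].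
Proof.
case=> a [b [E [h1 h2]]].
have -> : coord v = (a, b) by rewrite E -[_ + _]/(e1 (a, b)) coord_e1.
by split.
Qed.

Lemma e1_0 : e1 (0, 0) = 0.
Proof. by rewrite /e1 /= mul0r addr0. Qed.
Lemma e2_0 : e2 (0, 0) = 0.
Proof. by rewrite /e2 /= mul0r addr0. Qed.

Lemma e1_neq0 p : p != (0, 0) -> e1 p != 0.
Proof. by move=> H; apply/negP => /eqP E; move: H; rewrite -e1_0 in E; rewrite (e1_inj E) eqxx. Qed.
Lemma e2_neq0 p : p != (0, 0) -> e2 p != 0.
Proof. by move=> H; apply/negP => /eqP E; move: H; rewrite -e2_0 in E; rewrite (e2_inj E) eqxx. Qed.

Lemma tp_sq j (A W : pr) : 0 < e1 A -> 0 < e2 A -> W != (0, 0) ->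
  1 <= lam (2 * j).+1 (mulp (mulp A W) W).
Proof.
move=> h1 h2 hW; apply: lam_ge1.
  rewrite !e1M -mulrA mulr_gt0 // -expr2 exprn_even_gt0 //.
  exact: e1_neq0.
rewrite !e2M -mulrA mulr_gt0 // -expr2 exprn_even_gt0 //.
exact: e2_neq0.
Qed.

Lemma e1_sum m (T : 'I_m -> pr) :
  \sum_(i < m) e1 (T i) = e1 (\sum_(i < m) (T i).1, \sum_(i < m) (T i).2).
Proof.
rewrite /e1 big_split /= -mulr_suml.
by rewrite !raddf_sum.
Qed.

Lemma lam_sum a m (T : 'I_m -> pr) :
  lam a (\sum_(i < m) (T i).1, \sum_(i < m) (T i).2) = \sum_(i < m) lam a (T i).
Proof.
by rewrite /lam /lamg /= !mulr_sumr -big_split.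
Qed.

Lemma decomp j m (a x : 'I_m -> R) (Z : pr) :
  (forall i, totally_positive D (a i)) -> (forall i, in_OK D (x i)) ->
  lam (2 * j).+1 Z = 1 -> e1 Z = \sum_(i < m) a i * x i ^+ 2 ->
  exists i, e1 Z = a i * x i ^+ 2.
Proof.
move=> ha hx hZ E.
pose T i := mulp (mulp (coord (a i)) (coord (x i))) (coord (x i)).
have eT : forall i, e1 (T i) = a i * x i ^+ 2.
  move=> i; have [ea _ _] := tp_coord (ha i).
  by rewrite !e1M -ea -(coordP (hx i)) expr2 mulrA.
have E2 : Z = (\sum_(i < m) (T i).1, \sum_(i < m) (T i).2).
  by apply: e1_inj; rewrite -e1_sum E; apply: eq_bigr => i _; rewrite eT.
have lT : forall i, 0 <= lam (2 * j).+1 (T i) /\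
    (coord (x i) != (0, 0) -> 1 <= lam (2 * j).+1 (T i)) /\
    (coord (x i) = (0, 0) -> x i = 0).
  move=> i; have [_ h1 h2] := tp_coord (ha i).
  have t1 := @tp_sq j _ (coord (x i)) h1 h2.
  split; last split=> //; last first.
    by move=> H; rewrite (coordP (hx i)) H e1_0.
  have [H|H] := eqVneq (coord (x i)) (0, 0); last by apply: le_trans (t1 H).
  by rewrite /T H /lam /lamg /mulp /= !(mulr0, mul0r, addr0).
have hs := lam_sum (2 * j).+1 T; rewrite -E2 hZ in hs.
have [i Hi|H0] := pickP (fun i => coord (x i) != (0, 0)); last first.
  exfalso; move: hs; rewrite big1 // => i _.
  have := H0 i; rewrite /= => /negbFE/eqP H.
  by rewrite /T H /lam /lamg /mulp /= !(mulr0, mul0r, addr0).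
exists i.
rewrite E (bigD1 i) //= big1 ?addr0 // => k ki.
have [Hk|Hk] := eqVneq (coord (x k)) (0, 0).
  by rewrite ((lT k).2.2 Hk) expr2 !mulr0.
exfalso; move: hs; rewrite (bigD1 i) //= (bigD1 k) //=.
set S := (X in _ + (_ + X)).
have : 0 <= S by apply: sumr_ge0 => l _; exact: (lT l).1.
have := (lT i).2.1 Hi; have := (lT k).2.1 Hk.
move: S => S.
lia.
Qed.

Lemma e1_add (X Y : pr) : e1 (X.1 + Y.1, X.2 + Y.2) = e1 X + e1 Y.
Proof. rewrite /e1 /= !intrD; ring. Qed.
Lemma e1_sub (X Y : pr) : e1 (X.1 - Y.1, X.2 - Y.2) = e1 X - e1 Y.
Proof. rewrite /e1 /= !intrB; ring. Qed.

Lemma distinct_aux j (ai : R) (X Y : pr) (r1 r2 : int) :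
  e1 (zc (2 * j).+1 r1) = ai * (e1 X) ^+ 2 ->
  e1 (zc (2 * j).+1 r2) = ai * (e1 Y) ^+ 2 -> r1 != r2 ->
  (X.1 + Y.1, X.2 + Y.2) != (0, 0) /\ (X.1 - Y.1, X.2 - Y.2) != (0, 0).
Proof.
move=> h1 h2 r12.
have key : (e1 X) ^+ 2 = (e1 Y) ^+ 2 -> False.
  move=> E; move: h1; rewrite E -h2 !e1_zc => /eqP.
  rewrite -subr_eq0 => /eqP H.
  have [_ s2] := E_sign j.
  have : (r2 - r1)%:~R * En (2 * j).+2 = 0 :> R by rewrite -H intrB; ring.
  move/eqP; rewrite mulf_eq0 (gt_eqF s2) orbF intr_eq0 subr_eq0 => /eqP e.
  by move: r12; rewrite e eqxx.
split; apply/negP => /eqP E; apply: key.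
  have : e1 X + e1 Y = 0 by rewrite -e1_add E e1_0.
  by move/eqP; rewrite addr_eq0 => /eqP ->; rewrite sqrrN.
have : e1 X - e1 Y = 0 by rewrite -e1_sub E e1_0.
by move/eqP; rewrite subr_eq0 => /eqP ->.
Qed.

Lemma chain_bound j m (a : 'I_m -> R) :
  @tp_diagonal_form R D m a -> @universal_form R D m a ->
  u (2 * j).+1 + 1 <= 2 * m%:Z.
Proof.
move=> Hdiag Huniv.
set A := (2 * j).+1.
rewrite leNgt; apply/negP => Hlt.
have uA0 := u_ge1 A.
pose N := (`|u A|).+1.
have HN : (2 * m < N)%N by rewrite /N; lia.
have step : forall r : 'I_N, exists p : 'I_m * pr,
    e1 (zc A r%:Z) = a p.1 * (e1 p.2) ^+ 2.
  move=> r.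
  have r0 : 0 <= r%:Z by [].
  have rle : r%:Z <= u A by have := ltn_ord r; rewrite /N; lia.
  have [p1 p2] := zc_tp r0 rle.
  have tp : totally_positive D (e1 (zc A r)).
    by exists (zc A r).1, (zc A r).2.
  have [x [hx E]] := Huniv _ tp.
  have [i Ei] := decomp Hdiag hx (lam_zc A r) E.
  by exists (i, coord (x i)); rewrite -coordP.
pose g r := proj1_sig (constructive_indefinite_description _ (step r)).
have gP : forall r, e1 (zc A (r : 'I_N)%:Z) = a (g r).1 * (e1 (g r).2) ^+ 2.
  by move=> r; rewrite /g; case: constructive_indefinite_description.
have [i [r1 [r2 [r3 [[f1 f2 f3] [d12 d23 d31]]]]]] := pigeon3 (fun r => (g r).1) HN.
have [ea h1 h2] := tp_coord (Hdiag i).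
set Ai := coord (a i).
have pos : forall W : pr, W != (0, 0) ->
    1 <= Bf (Dl A * Qn A.+1) (Dl A * Pn A.+1) Ai W W.
  by move=> W hW; exact: (tp_sq j h1 h2 hW).
have one : forall r, (g r).1 = i ->
    Bf (Dl A * Qn A.+1) (Dl A * Pn A.+1) Ai (g r).2 (g r).2 = 1.
  move=> r fr; rewrite /Bf.
  have -> : mulp (mulp Ai (g r).2) (g r).2 = zc A r.
    by apply: e1_inj; rewrite !e1M (gP r) fr -ea expr2 mulrA.
  exact: lam_zc.
have neq : forall r r', r != r' -> (g r).1 = i -> (g r').1 = i ->
    ((g r).2.1 + (g r').2.1, (g r).2.2 + (g r').2.2) != (0, 0) /\
    ((g r).2.1 - (g r').2.1, (g r).2.2 - (g r').2.2) != (0, 0).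
  move=> r r' d fr fr'.
  apply: (@distinct_aux j (a i) _ _ r%:Z r'%:Z).
  - by rewrite (gP r) fr.
  - by rewrite (gP r') fr'.
  - by apply: contra d => /eqP [] e; apply/eqP/val_inj.
have [a1 a2] := neq _ _ d12 f1 f2.
have d13 : r1 != r3 by rewrite eq_sym.
have [a3 a4] := neq r1 r3 d13 f1 f3.
have [a5 a6] := neq _ _ d23 f2 f3.
exact: (core3 pos (one _ f1) (one _ f2) (one _ f3) a1 a2 a3 a4 a5 a6).
Qed.

Lemma xi_rec k : xi k = (u k)%:~R + (xi k.+1)^-1.
Proof.
rewrite xiS invrK; ring.
Qed.

Lemma xi_prod2 k : 2 <= xi k.+1 * xi k.+2.
Proof.
have h1 := xi_gt1 k.+1.
have -> : xi k.+1 * xi k.+2 = (u k.+1)%:~R * xi k.+2 + 1.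
  by rewrite {1}xi_rec mulrDl mulVf // gt_eqF // (lt_trans ltr01 h1).
have hu : (1 : R) <= (u k.+1)%:~R by rewrite ler1z u_ge1.
nra.
Qed.

Lemma xi_period s : @is_period R D s -> xi s.+1 = xi 1.
Proof.
case=> s0 per.
pose d k := xi (k + s) - xi k.
have dlt : forall k, (1 <= k)%N -> `|d k| < 1.
  move=> k k1; rewrite /d.
  have a1 := floor_le (xi k); have a2 := floorD1_gt (xi k).
  have b1 := floor_le (xi (k + s)); have b2 := floorD1_gt (xi (k + s)).
  have := per k k1; rewrite /cf_u => E; rewrite E in b1 b2.
  rewrite intrD in a2 b2.
  rewrite ltr_norml; apply/andP; split; lra.
have dS : forall k, (1 <= k)%N -> `|d k.+1| = `|d k| * (xi k.+1 * xi (k.+1 + s)).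
  move=> k k1; rewrite /d.
  have E : xi (k.+1 + s) = (xi (k + s) - (u k)%:~R)^-1.
    by rewrite addSn xiS per.
  have /andP[f1 _] := frac_pos k.
  have /andP[f2 _] := frac_pos (k + s).
  rewrite per // in f2.
  rewrite E xiS.
  have -> : (xi (k + s) - (u k)%:~R)^-1 - (xi k - (u k)%:~R)^-1 =
     - (xi (k + s) - xi k) * ((xi k - (u k)%:~R)^-1 * (xi (k + s) - (u k)%:~R)^-1).
    by field; rewrite !gt_eqF.
  rewrite normrM normrN; congr (_ * _).
  by rewrite ger0_norm // mulr_ge0 // ltW // invr_gt0.
have dS2 : forall k, (1 <= k)%N -> 2 * `|d k| <= `|d k.+2|.
  move=> k k1.
  rewrite (dS k.+1 (leqW k1)) (dS k k1).
  have p1 := xi_prod2 k.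
  have g1 := xi_gt1 (k + s); have g2 := xi_gt1 (k + s).+1.
  have g3 := xi_gt1 k; have g4 := xi_gt1 k.+1.
  have n0 := normr_ge0 (d k).
  rewrite !addSn.
  move: (`|d k|) n0 => a n0.
  move: (xi k.+1) (xi k.+2) (xi (k + s).+1) (xi (k + s).+2) g1 g2 g3 g4 p1 => x1 x2 y1 y2 g1 g2 g3 g4 p1.
  have -> : a * (x1 * y1) * (x2 * y2) = (a * (x1 * x2)) * (y1 * y2) by ring.
  have h1 : 2 * a <= a * (x1 * x2) by rewrite mulrC ler_wpM2l.
  apply: (le_trans h1); rewrite ler_peMr //; first by apply: (le_trans _ h1); rewrite mulr_ge0.
  by rewrite mulr_ege1 ?ltW.
have grow : forall n, 2 ^+ n * `|d 1%N| <= `|d (2 * n).+1|.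
  elim=> [|n IH]; first by rewrite expr0 mul1r.
  rewrite exprS -mulrA.
  apply: (le_trans (ler_wpM2l _ IH)) => //.
  have -> : (2 * n.+1).+1 = (2 * n).+3 by rewrite mulnS.
  exact: dS2.
have d0 : d 1%N = 0.
  apply/eqP; rewrite -normr_eq0; apply/negP => /negP nz.
  have pos : 0 < `|d 1%N| by rewrite lt_def nz normr_ge0.
  have := upper_nthrootP (leqnn (Num.bound (`|d 1%N|^-1))).
  set n := Num.bound _ => hb.
  have := grow n; have := dlt (2 * n).+1 isT => h1 h2.
  have : `|d 1%N|^-1 * `|d 1%N| < 2%:R ^+ n * `|d 1%N| by rewrite ltr_pM2r.
  rewrite mulVf ?gt_eqF //.
  move=> h3; have := lt_le_trans h3 h2.
  move=> h4; have := lt_trans h4 h1; by rewrite ltxx.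
by move/eqP: d0; rewrite subr_eq0 => /eqP.
Qed.

Lemma quad_red (x : R) (q q0 p p0 c : int) : x ^+ 2 = tt%:~R * x + nn%:~R ->
  (q0%:~R * x - p0%:~R) + (c%:~R + x) * (q%:~R * x - p%:~R) =
  (q * nn - p0 - c * p)%:~R + (q * tt + q0 + c * q - p)%:~R * x.
Proof.
move=> Hx.
have -> : (q0%:~R * x - p0%:~R) + (c%:~R + x) * (q%:~R * x - p%:~R) =
  q%:~R * (x ^+ 2) + (q0%:~R + c%:~R * q%:~R - p%:~R) * x - (p0%:~R + c%:~R * p%:~R) :> R
  by ring.
rewrite Hx !(intrD, intrB, intrM); ring.
Qed.

Lemma us_ge s : @is_period R D s -> 2 * u 0%N - tt <= u s.
Proof.
move=> Hp; have s0 : (0 < s)%N by case: Hp.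
have xs : xi s = (u s - u 0%N)%:~R + w.
  rewrite xi_rec xi_period // xiS invrK intrB /=; ring.
have E := E_xi s.
rewrite xs /En in E.
set q := Qn s.+1 in E; set p := Pn s.+1 in E; set q0 := Qn s in E; set p0 := Pn s in E.
set c := u s - u 0%N in E xs.
have E2 : (q0%:~R * w - p0%:~R) + (c%:~R + w) * (q%:~R * w - p%:~R) = 0.
  by rewrite E; ring.
rewrite (quad_red _ _ _ _ _ w_sq) in E2.
have [A0 A1] := w_irr E2.
have E3 : (q0%:~R * w' - p0%:~R) + (c%:~R + w') * (q%:~R * w' - p%:~R) = 0.
  by rewrite (quad_red _ _ _ _ _ w'_sq) A0 A1 mul0r addr0.
have : - Vn s = (c%:~R + w') * Vn s.+1.
  rewrite /Vn -/q -/p -/q0 -/p0.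
  apply/eqP; rewrite -subr_eq0; apply/eqP; rewrite -E3; ring.
have [v1 _] := V_pos s.
have v2 := V_incr s.-1; rewrite prednK // in v2.
move=> E4.
have hc : -1 < c%:~R + w'.
  have v3 : 0 < Vn s.+1 by apply: lt_trans v2.
  nra.
have hw := floor_le w.
rewrite w'E in hc.
have : ((u 0%N)%:~R : R) <= w by [].
move=> hw'.
have : ((u 0%N - 1 - tt)%:~R : R) < c%:~R.
  rewrite !intrB rmorph1; move: hc; rewrite /c intrB; lra.
rewrite ltr_int /c; lia.
Qed.

End Main.

Unset Implicit Arguments.

Theorem theorem12 (R : realType) (D : nat) (s : nat) (m : nat) (a : 'I_m -> R) :
  (1 < D)%N -> squarefree D ->
  @is_min_period R D s ->
  @tp_diagonal_form R D m a -> @universal_form R D m a ->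
  (if ~~ odd s then (@M_D R D s)%:~R / s%:R <= (m%:R : R)
   else (@M_D R D s)%:~R / (2 * s%:R) <= (m%:R : R)).
Proof.
move=> HD1 Hsf [Hp _] Hdiag Huniv.
have s0 : (0 < s)%N by case: Hp.
have per := Hp.2.
have cb : forall j, cf_u R D (2 * j).+1 + 1 <= 2 * m%:Z.
  by move=> j; exact: (@chain_bound R D HD1 Hsf j m a Hdiag Huniv).
have cbo : forall k, odd k -> cf_u R D k + 1 <= 2 * m%:Z.
  move=> k ok.
  have ek : k = (2 * k./2).+1.
    have := odd_double_half k; rewrite ok -mul2n /= => e; lia.
  by rewrite ek; apply: cb.
have sp : (0 < s%:R :> R) by rewrite ltr0n.
rewrite /M_D; case hs: (~~ odd s).
  rewrite ler_pdivrMr //.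
  have : \sum_(0 <= j < s./2) cf_u R D (2 * j + 1) <= \sum_(0 <= j < s./2) (2 * m%:Z - 1).
    by apply: ler_sum => j _; have := cb j; rewrite addn1; lia.
  rewrite sumr_const_nat subn0 => H.
  have hs2 : s = (s./2 * 2)%N.
    by rewrite -{1}(odd_double_half s) (negbTE hs) add0n -muln2.
  rewrite -[m%:R]/((m%:Z)%:~R) -[s%:R]/((s%:Z)%:~R) -intrM ler_int.
  apply: (le_trans H).
  rewrite pmulrn mulrzz.
  move: (s./2) hs2 => k hk.
  rewrite hk PoszM; nia.
have hodd : odd s by rewrite -[odd s]negbK hs.
have ub : forall k, (1 <= k)%N -> cf_u R D k + 1 <= 2 * m%:Z.
  move=> k k1; case ok: (odd k); first exact: cbo.
  rewrite -(per k k1); apply: cbo; by rewrite oddD ok hodd.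
have us := @us_ge R D HD1 Hsf s Hp.
have us2 := cbo s hodd.
have Hsum : \sum_(1 <= i < s) cf_u R D i <= \sum_(1 <= i < s) (2 * m%:Z - 1).
  apply: ler_sum_nat => i /andP[i1 _]; have := ub i i1; lia.
rewrite sumr_const_nat in Hsum.
have key : forall M : int, M = 2 * cf_u R D 0 - tt D + \sum_(1 <= i < s) cf_u R D i ->
    M%:~R / (2 * s%:R) <= (m%:R : R).
  move=> M ->.
  rewrite ler_pdivrMr ?mulr_gt0 //.
  rewrite -[m%:R]/((m%:Z)%:~R) -[s%:R]/((s%:Z)%:~R) -[2 : R]/((2%:Z)%:~R) -!intrM ler_int.
  move: Hsum; rewrite pmulrn mulrzz.
  move: (\sum_(1 <= i < s) cf_u R D i) => S.
  have -> : ((s - 1)%N : int) = s%:Z - 1 by rewrite subzn.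
  move: us us2; move: (cf_u R D s) (cf_u R D 0) (tt D) => x y z.
  nia.
rewrite /tt in key; case: ifP key => h key.
  by apply: key; lia.
by apply: key; lia.
Qed.
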